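(* Under the standing assumptions, $\tau(\theta)>0$ for every $\theta\in(\pi/2,\pi)$.
   Context: Standing assumptions: $a,b\in\mathbb{R}$ with $b>0$, $1+a+b>0$, $9-27a+b>0$, $2-8a+8a^2+ab\ne0$, $b+1-a\ne0$. Let $f^*(\zeta,\theta)=(\zeta+2\cos\theta)(2\zeta\cos\theta+1)+b\zeta-a(\zeta+2\cos\theta)^3$ and $f(\zeta,\theta)=\zeta^3f^*(1/\zeta,\theta)=\zeta(1+2\zeta\cos\theta)(2\cos\theta+\zeta)+b\zeta^2-a(1+2\zeta\cos\theta)^3$. Under these assumptions, for each $\theta\in(\pi/2,\pi)$ the polynomial $f^*(\cdot,\theta)$ has exactly one real zero in $(-1,1)$; denote it $w(\theta)$ and write $\zeta(\theta)=1/w(\theta)$ (taken as $\infty$ when $w(\theta)=0$). Define $\tau(\theta)=-w(\theta)-2\cos\theta$. *)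

(* Defs.v *)
From Stdlib Require Import Reals Lra.
Open Scope R_scope.

Definition standing (a b : R) : Prop :=
  b > 0 /\ 1 + a + b > 0 /\ 9 - 27 * a + b > 0 /\
  2 - 8 * a + 8 * a ^ 2 + a * b <> 0 /\ b + 1 - a <> 0.

Definition fstar (a b zeta theta : R) : R :=
  (zeta + 2 * cos theta) * (2 * zeta * cos theta + 1) + b * zeta
  - a * (zeta + 2 * cos theta) ^ 3.

(* tau expressed in terms of the zero w = w(theta) *)
Definition tau_of (w theta : R) : R := - w - 2 * cos theta.

(* Main.v *)
Require Import Defs.
From Stdlib Require Import Reals Lra Psatz.
Open Scope R_scope.

Theorem mainTheorem10 (a b : R) (Hab : standing a b) (theta w : R) :
  PI / 2 < theta < PI ->
  -1 < w < 1 ->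
  fstar a b w theta = 0 ->
  tau_of w theta > 0.
Proof.
  intros [H1 H2] [Hw1 Hw2] Hf.
  destruct Hab as [Hb [_ [H9 _]]].
  unfold fstar in Hf; unfold tau_of.
  set (c := cos theta) in *.
  assert (Hc0 : c < 0) by (apply cos_lt_0; lra).
  assert (Hc1 : -1 < c).
  { unfold c; rewrite <- cos_PI. apply cos_decreasing_1; lra. }
  destruct (Rlt_or_le 0 (- w - 2 * c)) as [Hp|Hn]; [exact Hp|exfalso].
  set (u := w + 2 * c) in *.
  assert (Hu : 0 <= u) by (unfold u; lra).
  assert (Hwp : 0 < w) by lra.
  assert (Hu1 : u < 1) by (unfold u; lra).
  assert (Ht : c > -1/2) by lra.
  assert (Hpos : 0 < 1 + 2 * w * c) by nra.
  assert (Hk : u^2/3 < 1 + 2 * w * c).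
  { unfold u. nra. }
  assert (Hu3 : u^3 <= u) by nra.
  assert (Hu3' : u^3 < w) by (unfold u in *; nra).
  assert (E : u * (2 * w * c + 1) + b * w - a * u ^ 3 = 0) by lra.
  destruct (Rle_or_lt a 0) as [Ha|Ha].
  - assert (0 <= u^3) by (apply pow_le; lra).
    assert (0 <= u * (2*w*c+1)) by nra. nra.
  - assert (a * u^3 <= (9+b)/27 * u^3).
    { apply Rmult_le_compat_r; [apply pow_le; lra| lra]. }
    assert (u^3/3 <= u * (2*w*c+1)).
    { replace (u^3/3) with (u * (u^2/3)) by (simpl; field). apply Rmult_le_compat_l; lra. }
    assert (b * u^3 < 27 * b * w) by nra.
    nra.
Qed.
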